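(* Let $E$, $D$, $S$ be binary random variables taking values in $\{0,1\}$ such that every joint cell probability $P(E=e,D=d,S=s)$ is positive, and write $p(d,e)=P(S=1\mid D=d,E=e)$ and $o(d,e)=p(d,e)/(1-p(d,e))$. Define the interaction measures $$I_{OR}=\frac{o(1,1)\,o(0,0)}{o(1,0)\,o(0,1)},\quad I_{RR}=\frac{p(1,1)\,p(0,0)}{p(1,0)\,p(0,1)},\quad I_{RD}=p(1,1)+p(0,0)-p(1,0)-p(0,1).$$ (a) Suppose that at least one of $I_{OR}\le 1$, $I_{RR}\le 1$, $I_{RD}\le 0$ holds (non-positive interaction of $E$ and $D$ on $S$ on the odds ratio, risk ratio, or risk difference scale, respectively), and that $p(d,e)$ is non-decreasing in both $d$ and $e$, or non-increasing in both $d$ and $e$. Then $\mathrm{OR}_{ED\mid S=1}\le \mathrm{OR}_{ED}$. (b) Suppose that at least one of $I_{OR}\ge 1$, $I_{RR}\ge 1$, $I_{RD}\ge 0$ holds (non-negative interaction on the corresponding scale), and that $p(d,e)$ is non-decreasing in one of $d,e$ and non-increasing in the other. Then $\mathrm{OR}_{ED\mid S=1}\ge \mathrm{OR}_{ED}$.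
   Context: For binary random variables $A,B$ and a random variable $C$, $\mathrm{OR}_{AB\mid C=c}=\frac{P(A=1,B=1\mid C=c)P(A=0,B=0\mid C=c)}{P(A=1,B=0\mid C=c)P(A=0,B=1\mid C=c)}$ and $\mathrm{OR}_{AB}$ is the unconditional version. ''Non-decreasing in $d$'' means $p(1,e)\ge p(0,e)$ for each $e\in\{0,1\}$; ''non-decreasing in $e$'' means $p(d,1)\ge p(d,0)$ for each $d\in\{0,1\}$; non-increasing analogously. *)

(* Defs.v *)
(* A joint distribution of three binary random variables
   E, D, S is given by its cell probabilities q e d s = P(E=e, D=d, S=s),
   with false = 0 and true = 1. *)
From mathcomp Require Import all_boot all_order all_algebra.
Set Implicit Arguments. Unset Strict Implicit. Unset Printing Implicit Defensive.
Import Order.TTheory GRing.Theory Num.Theory.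
Local Open Scope ring_scope.

Section Defs.
Variable R : realFieldType.
Variable q : bool -> bool -> bool -> R.

Definition joint_dist : Prop :=
  (forall e d s, 0 < q e d s) /\
  \sum_(e : bool) \sum_(d : bool) \sum_(s : bool) q e d s = 1.

Definition PED (e d : bool) : R := q e d true + q e d false.
Definition PS (s : bool) : R := \sum_(e : bool) \sum_(d : bool) q e d s.
Definition PED_S (s e d : bool) : R := q e d s / PS s.

Definition prob (d e : bool) : R := q e d true / PED e d.
Definition odds (d e : bool) : R := prob d e / (1 - prob d e).

Definition I_OR : R :=
  (odds true true * odds false false) / (odds true false * odds false true).
Definition I_RR : R :=
  (prob true true * prob false false) / (prob true false * prob false true).
Definition I_RD : R :=
  prob true true + prob false false - prob true false - prob false true.

Definition OR_ED : R :=
  (PED true true * PED false false) / (PED true false * PED false true).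
Definition OR_ED_S1 : R :=
  (PED_S true true true * PED_S true false false) /
  (PED_S true true false * PED_S true false true).

Definition nondec_d : Prop := forall e, prob false e <= prob true e.
Definition noninc_d : Prop := forall e, prob true e <= prob false e.
Definition nondec_e : Prop := forall d, prob d false <= prob d true.
Definition noninc_e : Prop := forall d, prob d true <= prob d false.
End Defs.

(* Main.v *)
Require Import Defs.
From mathcomp Require Import all_boot all_order all_algebra.
From mathcomp Require Import ring lra.
Import Order.TTheory GRing.Theory Num.Theory.
Local Open Scope ring_scope.
Lemma rd_lem {R : realFieldType} (x y z w : R) :
  0 < y -> y <= z -> y <= w -> x + y <= z + w -> x * y <= z * w.
Proof. move=> *; nra. Qed.

Lemma core (R : realFieldType) (x y z w : R) :
  0 < y -> x < 1 -> y <= z -> z <= x -> y <= w -> w <= x ->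
  (x * y * ((1 - z) * (1 - w)) <= z * w * ((1 - x) * (1 - y))
   \/ x * y <= z * w \/ x + y <= z + w) -> x * y <= z * w.
Proof.
move=> y0 x1 yz zx yw wx [H|[H|H]]; last by apply: rd_lem.
- case: (lerP (x * y) (z * w)) => // lt.
  have h1 : z + w <= x + y.
    case: (lerP (z+w) (x+y)) => // h; have := rd_lem _ _ _ _ y0 yz yw (ltW h); lra.
  have h2 : (1 - x) * (1 - y) <= (1 - z) * (1 - w).
    rewrite [X in X <= _]mulrC; apply: rd_lem; lra.
  have h3 : 0 < (1 - x) * (1 - y) by apply: mulr_gt0; lra.
  have : z * w * ((1 - x) * (1 - y)) < x * y * ((1 - x) * (1 - y)) by rewrite ltr_pM2r.
  have : x * y * ((1 - x) * (1 - y)) <= x * y * ((1 - z) * (1 - w)).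
    by rewrite ler_pM2l // mulr_gt0 //; lra.
  lra.
- done.
Qed.

Lemma ratio_le1 {R : realFieldType} (A B : R) : 0 < B -> (A / B <= 1) = (A <= B).
Proof. by move=> B0; rewrite ler_pdivrMr // mul1r. Qed.

Lemma ratio_ge1 {R : realFieldType} (A B : R) : 0 < B -> (1 <= A / B) = (B <= A).
Proof. by move=> B0; rewrite ler_pdivlMr // mul1r. Qed.

Lemma odds_eq {R : realFieldType} (x y z w : R) :
  0 < x < 1 -> 0 < y < 1 -> 0 < z < 1 -> 0 < w < 1 ->
  (x / (1 - x) * (y / (1 - y))) / (z / (1 - z) * (w / (1 - w))) =
  (x * y * ((1 - z) * (1 - w))) / (z * w * ((1 - x) * (1 - y))).
Proof.
move=> /andP[? ?] /andP[? ?] /andP[? ?] /andP[? ?].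
field.
by rewrite !subr_eq0 !gt_eqF // lt_eqF.
Qed.

Theorem mainTheorem4 (R : realFieldType) (q : bool -> bool -> bool -> R) :
  joint_dist q ->
  (* (a) *)
  ((I_OR q <= 1 \/ I_RR q <= 1 \/ I_RD q <= 0) ->
   ((nondec_d q /\ nondec_e q) \/ (noninc_d q /\ noninc_e q)) ->
   OR_ED_S1 q <= OR_ED q) /\
  (* (b) *)
  ((I_OR q >= 1 \/ I_RR q >= 1 \/ I_RD q >= 0) ->
   ((nondec_d q /\ noninc_e q) \/ (noninc_d q /\ nondec_e q)) ->
   OR_ED_S1 q >= OR_ED q).
Proof.
move=> [qp _].
have pb : forall d e, 0 < prob q d e < 1.
  move=> d e; rewrite /prob /PED.
  have h1 := qp e d true; have h2 := qp e d false.
  apply/andP; split; first by apply: divr_gt0 => //; lra.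
  by rewrite ltr_pdivrMr ?mul1r; lra.
have PSp : 0 < PS q true.
  rewrite /PS !big_bool /=; have := qp true true true; have := qp true false true;
  have := qp false true true; have := qp false false true; lra.
have PEDp : forall e d, 0 < PED q e d.
  by move=> e d; rewrite /PED; have := qp e d true; have := qp e d false; lra.
have ORp : 0 < OR_ED q.
  by rewrite /OR_ED; apply: divr_gt0; apply: mulr_gt0.
have eq1 : OR_ED_S1 q = I_RR q * OR_ED q.
  rewrite /OR_ED_S1 /I_RR /OR_ED /PED_S /prob.
  have := qp true true true; have := qp true false true;
  have := qp false true true; have := qp false false true.
  have := PEDp true true; have := PEDp true false;
  have := PEDp false true; have := PEDp false false.
  by move=> *; field; rewrite !gt_eqF.
set p11 := prob q true true; set p00 := prob q false false.
set p10 := prob q true false; set p01 := prob q false true.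
have h11 := pb true true; have h00 := pb false false.
have h10 := pb true false; have h01 := pb false true.
rewrite -/p11 -/p00 -/p10 -/p01 in h11 h00 h10 h01.
move: (h11) (h00) (h10) (h01) => /andP[a1 a2] /andP[b1 b2] /andP[c1 c2] /andP[d1 d2].
have RRe : I_RR q = (p11 * p00) / (p10 * p01) by [].
have ORe : I_OR q = (p11 * p00 * ((1 - p10) * (1 - p01))) / (p10 * p01 * ((1 - p11) * (1 - p00))).
  by rewrite /I_OR /odds -/p11 -/p00 -/p10 -/p01 odds_eq.
have RDe : I_RD q = p11 + p00 - p10 - p01 by [].
have pz : 0 < p10 * p01 by apply: mulr_gt0.
have pz' : 0 < p11 * p00 by apply: mulr_gt0.
have oz : 0 < p10 * p01 * ((1 - p11) * (1 - p00)).
  by apply: mulr_gt0 => //; apply: mulr_gt0; lra.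
have oz' : 0 < p11 * p00 * ((1 - p10) * (1 - p01)).
  by apply: mulr_gt0 => //; apply: mulr_gt0; lra.
split.
- rewrite ORe RRe RDe ratio_le1 // ratio_le1 // => Hc Hm.
  rewrite eq1 RRe; apply: ler_piMl; first exact: ltW.
  rewrite ratio_le1 //.
  case: Hm => [[Hd He]|[Hd He]].
  + move: (Hd false) (Hd true) (He false) (He true).
    rewrite -/p11 -/p00 -/p10 -/p01 => e1 e2 e3 e4.
    apply: core => //; case: Hc => [H|[H|H]]; [left|right;left|right;right] => //; lra.
  + move: (Hd false) (Hd true) (He false) (He true).
    rewrite -/p11 -/p00 -/p10 -/p01 => e1 e2 e3 e4.
    rewrite [p11 * p00]mulrC; apply: core => //.
    case: Hc => [H|[H|H]]; [left|right;left|right;right] => //; try lra.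
    all: try by move: H; rewrite [X in X * _ <= _]mulrC.
- rewrite ORe RRe RDe ratio_ge1 // ratio_ge1 // => Hc Hm.
  rewrite eq1 RRe; apply: ler_peMl; first exact: ltW.
  rewrite ratio_ge1 //.
  case: Hm => [[Hd He]|[Hd He]].
  + move: (Hd false) (Hd true) (He false) (He true).
    rewrite -/p11 -/p00 -/p10 -/p01 => e1 e2 e3 e4.
    apply: core => //; case: Hc => [H|[H|H]]; [left|right;left|right;right] => //; lra.
  + move: (Hd false) (Hd true) (He false) (He true).
    rewrite -/p11 -/p00 -/p10 -/p01 => e1 e2 e3 e4.
    rewrite [p10 * p01]mulrC; apply: core => //.
    case: Hc => [H|[H|H]]; [left|right;left|right;right] => //; try lra.
    all: try by move: H; rewrite [X in X * _ <= _]mulrC.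
Qed.
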